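(* Let $k\hookrightarrow K$ be a finite field extension, $V$ a $K$-vector space and $\varphi\in\mathrm{End}_K(V)$ finite potent such that $1+\varphi$ is invertible. Then $$\operatorname{Det}^k_V(1+\varphi)=N_{K/k}\big[\operatorname{Det}^K_V(1+\varphi)\big],$$ where $N_{K/k}\colon K^\times\to k^\times$ is the norm of the extension and $V$ is regarded as a $k$-vector space on the left-hand side.
   Context: An endomorphism $\varphi$ of a vector space $U$ over a field $F$ is finite potent if $\varphi^nU$ is finite dimensional for some $n$; then $\operatorname{Det}^F_U(1+\varphi)$ is the ordinary determinant over $F$ of $1+\varphi$ restricted to any finite-dimensional $\varphi$-invariant $F$-subspace $W$ with $\varphi^nU\subseteq W$ for some $n$. *)

(* Defs.v *)
From HB Require Import structures.
From mathcomp Require Import all_boot all_order all_algebra all_field.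
From Stdlib Require Import ClassicalEpsilon.
Set Implicit Arguments.
Unset Strict Implicit.
Unset Printing Implicit Defensive.
Import GRing.Theory.
Local Open Scope ring_scope.

(* Generic setting: an additive group V with a scalar action sc of a field F
   (sc is the F-vector-space structure under consideration). *)
Section Generic.
Variables (F : fieldType) (V : zmodType) (sc : F -> V -> V).

Definition in_span n (b : 'I_n -> V) (v : V) : Prop :=
  exists c : 'I_n -> F, v = \sum_(i < n) sc (c i) (b i).

Definition free_fam n (b : 'I_n -> V) : Prop :=
  forall c : 'I_n -> F, \sum_(i < n) sc (c i) (b i) = 0 -> forall i, c i = 0.

(* phi is finite potent: phi^m V is a finite-dimensional F-subspace, i.e.
   it is spanned by finitely many of its own elements. *)
Definition finite_potent (phi : V -> V) : Prop :=
  exists m n (s : 'I_n -> V),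
    (forall i, exists u, s i = iter m phi u) /\
    (forall u, in_span s (iter m phi u)).

(* Admissible data for computing Det^F_V(1+phi): a basis b of a
   finite-dimensional phi-invariant subspace W = span b with phi^m V <= W,
   and the matrix M of phi|_W in that basis (column j = coordinates of
   phi (b j)). *)
Definition det_data (phi : V -> V) (x : {n : nat & ('I_n -> V) * 'M[F]_n}) : Prop :=
  let b := (projT2 x).1 in let M := (projT2 x).2 in
  free_fam b /\
  (exists m, forall u, in_span b (iter m phi u)) /\
  (forall j, phi (b j) = \sum_i sc (M i j) (b i)).

Definition det_data_inh : inhabited {n : nat & ('I_n -> V) * 'M[F]_n} :=
  inhabits (existT _ 0%N ((fun _ => 0), 0)).

(* Det^F_V(1 + phi): the ordinary determinant over F of (1+phi) restricted
   to any such W (well defined by the paper; here a choice is made). *)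
Definition Det1p (phi : V -> V) : F :=
  let x := epsilon det_data_inh (det_data phi) in \det (1%:M + (projT2 x).2).

End Generic.

(* Norm N_{K/k}(a) of a finite field extension K/k: the determinant of the
   k-linear map x |-> a x on K. *)
Definition normK (k : fieldType) (K : fieldExtType k) (a : K) : k :=
  \det (\matrix_(i, j) coord (vbasis {:K}) i (a * tnth (vbasis {:K}) j)).

Definition res_scale (k : fieldType) (K : fieldExtType k) (V : lmodType K)
  (a : k) (v : V) : V := (a%:A : K) *: v.

(* Main.v *)
Require Import Defs.
From HB Require Import structures.
From mathcomp Require Import all_boot all_order all_algebra all_field.
From Stdlib Require Import ClassicalEpsilon Classical.
Set Implicit Arguments. Unset Strict Implicit.
Import GRing.Theory.
Local Open Scope ring_scope.

Lemma map_mxX (R S : comNzRingType) (f : {rmorphism R -> S}) n (A : 'M[R]_n) q :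
  map_mx f (A ^+ q) = (map_mx f A) ^+ q.
Proof.
elim: q => [|q IH]; first by rewrite !expr0 map_mx1.
by rewrite !exprS map_mxM IH.
Qed.

Lemma det_nil (F : fieldType) n (N : 'M[F]_n) q : N ^+ q = 0 -> \det (1 + N) = 1.
Proof.
move=> Nq.
pose Nt : 'M[{poly F}]_n := 'X *: map_mx polyC N.
have Ntq : Nt ^+ q = 0.
  suff -> : Nt ^+ q = 'X ^+ q *: map_mx polyC (N ^+ q) by rewrite Nq map_mx0 scaler0.
  elim: q {Nq} => [|q IH]; first by rewrite !expr0 map_mx1 scale1r.
  rewrite exprS IH /Nt [in RHS]exprS; rewrite -mulmxE; idtac.
  by rewrite -scalemxAl -scalemxAr scalerA exprS -map_mxM.
have : (1 + Nt) \in unitmx.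
  have h := subrX1 (- Nt) q.
  rewrite exprNn Ntq mulr0 sub0r -opprD mulNr in h.
  have /mulmx1_unit[] // : (1 + Nt) *m (\sum_(i < q) (- Nt) ^+ i) = 1%:M.
  by apply: oppr_inj; rewrite [RHS]h addrC.
rewrite unitmxE poly_unitE => /andP[/size_poly1P[c _ hc] _].
have ev : forall x : F, \det (1 + x *: N) = c.
  move=> x; have := det_map_mx (horner_eval x) (1 + Nt).
  rewrite hc /= horner_evalE hornerC => <-; congr (\det _).
  apply/matrixP => i j; rewrite !mxE /= horner_evalE.
  by rewrite !hornerE; case: (i == j); rewrite ?hornerC.
by rewrite -(scale1r N) ev -(ev 0) scale0r addr0 det1.
Qed.

Lemma mulE (R : pzSemiRingType) n (A B : 'M[R]_n) : A * B = A *m B.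
Proof. by []. Qed.

Lemma lblock_pow (R : pzRingType) r s (B : 'M[R]_r) (X : 'M[R]_(s, r)) (Y : 'M[R]_s) q :
  exists X', (block_mx B 0 X Y : 'M_(r + s)) ^+ q = block_mx (B ^+ q) 0 X' (Y ^+ q).
Proof.
elim: q => [|q [X' IH]].
  by exists 0; rewrite !expr0 -scalar_mx_block.
exists (X *m B ^+ q + Y *m X'); rewrite exprS IH mulE mulmx_block.
by rewrite !mulmx0 !mul0mx !addr0 !add0r -!mulE -!exprS.
Qed.

Lemma MLp (F : fieldType) r s (T : 'M[F]_(r + s)) (C : 'M_(r, r + s))
   (E : 'M_(s, r + s)) (B : 'M_r) q :
  col_mx C E \in unitmx -> C *m T = B *m C -> (T ^+ q <= C)%MS ->
  \det (1 + T) = \det (1 + B).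
Proof.
set P := col_mx C E => Pu hCT hTq.
have CP : C *m invmx P = row_mx 1%:M 0.
  have -> : C = row_mx 1%:M 0 *m P by rewrite mul_row_col mul1mx mul0mx addr0.
  by rewrite mulmxK.
pose X := lsubmx (E *m T *m invmx P); pose Y := rsubmx (E *m T *m invmx P).
have ZE : P *m T *m invmx P = block_mx B 0 X Y.
  rewrite /P mul_col_mx mul_col_mx hCT -mulmxA CP mul_mx_row mulmx1 mulmx0.
  by rewrite block_mxEv hsubmxK.
have detT : \det (1 + T) = \det (1 + P *m T *m invmx P).
  have -> : 1 + P *m T *m invmx P = P *m (1 + T) *m invmx P.
    by rewrite mulmxDr mulmxDl mulmx1 mulmxV.
  rewrite !det_mulmx det_inv mulrC mulrA mulVr ?mul1r //.
rewrite detT ZE [1]scalar_mx_block add_block_mx addr0 det_lblock.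
suff Yq : Y ^+ q = 0 by rewrite (det_nil Yq) mulr1.
have [X' hq] := lblock_pow B X Y q.
have : (P *m T *m invmx P) ^+ q = P *m T ^+ q *m invmx P.
  elim: (q) => [|q' IH]; first by rewrite !expr0 mulmx1 mulmxV.
  by rewrite exprS IH mulE !mulmxA mulmxKV // exprS mulE !mulmxA.
rewrite ZE hq; move/submxP: hTq => [W ->].
rewrite -!mulmxA CP mul_mx_row mulmx1 mulmx0 mul_mx_row mulmx0 => h.
have := congr1 drsubmx h; rewrite block_mxKdr => ->; apply/matrixP => i j; rewrite !mxE. by rewrite (unsplitK (inr _ j)) mxE.
Qed.

Lemma ML (F : fieldType) n r (T : 'M[F]_n) (C : 'M_(r, n)) (B : 'M_r) q :
  row_free C -> C *m T = B *m C -> (T ^+ q <= C)%MS ->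
  \det (1 + T) = \det (1 + B).
Proof.
move=> Cf; have rn : (r <= n)%N by rewrite -(eqP Cf) rank_leq_col.
move: T C Cf; rewrite -(subnKC rn) => T C Cf hCT hTq.
have eqr : \rank (C^C)%MS = (n - r)%N by rewrite mxrank_compl (eqP Cf) addKn.
pose E := castmx (eqr, erefl) (row_base (C^C)%MS).
apply: (@MLp _ _ _ T C E B q) => //.
rewrite -row_full_unit /row_full -addsmxE.
have -> : (\rank (C + E) = \rank (C + C^C))%MS.
  apply/eqmx_rank/eqmxP; apply: adds_eqmx => //.
  exact: eqmx_trans (eqmx_cast _ _) (eq_row_base _).
exact: addsmx_compl_full.
Qed.

Section Gen.
Variables (F : fieldType) (V : lmodType F) (phi : V -> V).
Hypothesis phiD : forall u v, phi (u + v) = phi u + phi v.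
Hypothesis phiZ : forall (a : F) u, phi (a *: u) = a *: phi u.

Local Notation sc := (fun (a : F) (v : V) => a *: v).

Definition lc n (b : 'I_n -> V) (x : 'I_n -> F) := \sum_i x i *: b i.

Lemma phi0 : phi 0 = 0.
Proof. by have := phiZ 0 0; rewrite !scale0r. Qed.

Lemma phi_sum I (r : seq I) (P : pred I) (f : I -> V) :
  phi (\sum_(i <- r | P i) f i) = \sum_(i <- r | P i) phi (f i).
Proof. by apply: (big_morph phi phiD phi0). Qed.

Lemma iter_phi_sum m n (b : 'I_n -> V) x :
  iter m phi (lc b x) = lc (fun i => iter m phi (b i)) x.
Proof.
elim: m => [|m IH] //=; rewrite IH /lc phi_sum.
by apply: eq_bigr => i _; rewrite phiZ.
Qed.

Lemma iter_phiC m v : iter m phi (phi v) = phi (iter m phi v).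
Proof. by rewrite -iterSr. Qed.

Lemma lc_comp n r (c : 'I_r -> V) (b : 'I_n -> V) (X : 'I_r -> 'I_n -> F) w :
  (forall j, c j = lc b (X j)) ->
  lc c w = lc b (fun i => \sum_j w j * X j i).
Proof.
move=> hc; rewrite /lc.
under eq_bigr => j _ do rewrite hc /lc scaler_sumr.
rewrite exchange_big /=; apply: eq_bigr => i _.
by rewrite scaler_suml; apply: eq_bigr => j _; rewrite scalerA.
Qed.

Lemma span_trans n p (c : 'I_n -> V) (g : 'I_p -> V) v :
  (forall i, in_span sc c (g i)) -> in_span sc g v -> in_span sc c v.
Proof.
move=> hg [x ->]; have [X hX] := fin_all_exists hg.
exists (fun i => \sum_j x j * X j i).
by have := lc_comp x hX; rewrite /lc.
Qed.

Lemma span_lc n (b : 'I_n -> V) x : in_span sc b (lc b x).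
Proof. by exists x. Qed.

Lemma span_gen n (b : 'I_n -> V) i : in_span sc b (b i).
Proof.
exists (fun j => (i == j)%:R); rewrite (bigD1 i) //= eqxx scale1r big1 ?addr0 //.
by move=> j /negbTE; rewrite eq_sym => ->; rewrite scale0r.
Qed.

Lemma span_iter n (b : 'I_n -> V) m v :
  (forall j, in_span sc b (phi (b j))) -> in_span sc b v -> in_span sc b (iter m phi v).
Proof.
move=> hb; elim: m v => [|m IH] v hv //=.
rewrite -iter_phiC; apply: IH.
case: hv => x ->; rewrite phi_sum.
apply: (@span_trans _ n _ (fun i => phi (b i))); first exact: hb.
by exists x; apply: eq_bigr => i _; rewrite phiZ.
Qed.

Lemma free_uniq n (b : 'I_n -> V) x y :
  free_fam sc b -> lc b x = lc b y -> x =1 y.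
Proof.
move=> fb e i; apply/eqP; rewrite -subr_eq0; apply/eqP.
apply: (fb (fun i => x i - y i)); move: e; rewrite /lc => e.
under eq_bigr do rewrite scalerBl.
by rewrite sumrB e subrr.
Qed.

Lemma extract p (g : 'I_p -> V) : exists r (c : 'I_r -> V),
  [/\ free_fam sc c, (forall j, in_span sc g (c j)) & (forall i, in_span sc c (g i))].
Proof.
elim: p g => [|p IH] g.
  by exists 0%N, g; split; [move=> x _ [] | exact: span_gen | exact: span_gen].
case: (classic (free_fam sc g)) => fg.
  by exists p.+1, g; split => //; exact: span_gen.
have [x [hx [i0 hi0]]] : exists x, lc g x = 0 /\ exists i, x i <> 0.
  move: fg; rewrite /free_fam => /not_all_ex_not[x H]; have [hx H2] := imply_to_and _ _ H; have [i hi] := not_all_ex_not _ _ H2.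
  by exists x; split => //; exists i.
pose g' := fun j : 'I_p => g (lift i0 j).
have [r [c [fc hc1 hc2]]] := IH g'.
have g'g : forall j, in_span sc g (g' j) by move=> j; exact: span_gen.
have gi0 : in_span sc g' (g i0).
  exists (fun j => - x (lift i0 j) / x i0).
  move: hx; rewrite /lc (bigD1_ord i0) //= => hx.
  have e : x i0 *: g i0 = - \sum_(i < p) x (lift i0 i) *: g (lift i0 i).
    by apply/eqP; rewrite -addr_eq0 hx.
  have hi0' : x i0 != 0 by apply/eqP.
  apply: (scalerI hi0'); rewrite e scaler_sumr -sumrN; apply: eq_bigr => j _.
  by rewrite scalerA mulrCA mulfV // mulr1 scaleNr.
exists r, c; split => //.
  by move=> j; apply: (span_trans g'g).
move=> i; case: (unliftP i0 i) => [j ->|->]; first exact: hc2.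
exact: (span_trans hc2).
Qed.

Lemma det1tr n (M : 'M[F]_n) : \det (1 + M) = \det (1 + M^T).
Proof. by rewrite -det_tr linearD /= trmx1. Qed.

Lemma KL n (b : 'I_n -> V) (M : 'M[F]_n) r (c : 'I_r -> V) (A : 'M[F]_r) q :
  free_fam sc b -> (forall j, phi (b j) = \sum_i M i j *: b i) ->
  free_fam sc c -> (forall j, phi (c j) = \sum_i A i j *: c i) ->
  (forall j, in_span sc b (c j)) -> (forall j, in_span sc c (iter q phi (b j))) ->
  \det (1 + M) = \det (1 + A).
Proof.
move=> fb hb fc hc cb bc.
have [X hX] := fin_all_exists cb.
pose C := \matrix_(j, i) X j i : 'M_(r, n).
have hC : forall j, c j = lc b (fun i => C j i).
  by move=> j; rewrite hX /lc; apply: eq_bigr => i _; rewrite mxE.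
have phi_lc : forall x, phi (lc b x) = lc b (fun l => \sum_i x i * M l i).
  move=> x; rewrite [in LHS]/lc phi_sum.
  under eq_bigr do rewrite phiZ.
  change (lc (fun i => phi (b i)) x = lc b (fun l => \sum_i x i * M l i)).
  by apply: (lc_comp x) => i; rewrite hb.
have Cfree : row_free C.
  rewrite -kermx_eq0; apply/eqP/row_matrixP => i; rewrite row0.
  have uC : row i (kermx C) *m C = 0 by apply/sub_kermxP; exact: row_sub.
  apply/rowP => j; rewrite [RHS]mxE.
  apply: (fc (fun j => row i (kermx C) 0 j)).
  change (lc c (fun j => row i (kermx C) 0 j) = 0).
  rewrite (lc_comp _ hC) /lc big1 // => l _.
  have e : \sum_j row i (kermx C) 0 j * C j l = 0.
    by have := congr1 (fun N : 'M[F]_(1, n) => N 0 l) uC; rewrite !mxE.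
  by rewrite e scale0r.
have hCT : C *m M^T = A^T *m C.
  apply/matrixP => j l; apply: (@free_uniq n b) => //.
  transitivity (phi (c j)).
    rewrite hC phi_lc /lc; apply: eq_bigr => i _; congr (_ *: _).
    by rewrite !mxE; apply: eq_bigr => u _; rewrite !mxE.
  rewrite hc; change (lc c (fun i => A i j) = lc b (fun l => (A^T *m C) j l)).
  rewrite (lc_comp _ hC) /lc; apply: eq_bigr => i _; congr (_ *: _).
  by rewrite !mxE; apply: eq_bigr => u _; rewrite !mxE.
have hit : forall q' i, iter q' phi (b i) = lc b (fun l => (M^T ^+ q') i l).
  elim=> [|q' IH] i /=.
    rewrite /lc (bigD1 i) //= expr0 mxE eqxx scale1r big1 ?addr0 // => l /negbTE.
    by rewrite mxE eq_sym => ->; rewrite scale0r.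
  rewrite IH phi_lc /lc; apply: eq_bigr => l _; congr (_ *: _).
  by rewrite exprSr mulE mxE; apply: eq_bigr => u _; rewrite !mxE.
have hTq : (M^T ^+ q <= C)%MS.
  apply/row_subP => i; have [w hw] := bc i.
  apply/submxP; exists (\row_j w j); apply/rowP => l.
  apply: (@free_uniq n b) => //.
  transitivity (iter q phi (b i)).
    by rewrite hit /lc; apply: eq_bigr => u _; rewrite mxE.
  rewrite hw; change (lc c w = lc b ((\row_j w j *m C) 0)).
  rewrite (lc_comp _ hC) /lc; apply: eq_bigr => u _; congr (_ *: _).
  by rewrite !mxE; apply: eq_bigr => v _; rewrite !mxE.
by rewrite det1tr (ML Cfree hCT hTq) -det1tr.
Qed.

Lemma WD (x1 x2 : {n : nat & ('I_n -> V) * 'M[F]_n}) :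
  det_data sc phi x1 -> det_data sc phi x2 ->
  \det (1 + (projT2 x1).2) = \det (1 + (projT2 x2).2).
Proof.
case: x1 => n1 [b1 M1]; case: x2 => n2 [b2 M2]; rewrite /det_data /=.
move=> [f1 [[m1 s1] h1]] [f2 [[m2 s2] h2]].
pose g := fun i => iter m2 phi (b1 i).
have [r [c [fc cg gc]]] := extract g.
have inv1 : forall j, in_span sc b1 (phi (b1 j)).
  by move=> j; rewrite h1; exists (fun i => M1 i j).
have gphi : forall v, in_span sc b1 v -> in_span sc g (iter m2 phi v).
  by move=> v [x ->]; exists x; rewrite -/(lc b1 x) iter_phi_sum.
have [A hA] : exists A : 'M[F]_r, forall j, phi (c j) = \sum_i A i j *: c i.
  have : forall j, in_span sc c (phi (c j)).
    move=> j; case: (cg j) => x ->; apply: (span_trans gc).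
    rewrite -/(lc g x) (_ : lc g x = iter m2 phi (lc b1 x)); last first.
      by rewrite iter_phi_sum.
    rewrite -iter_phiC; apply: gphi.
    exact: (span_iter 1 inv1 (span_lc _ _)).
  move/fin_all_exists => [Y hY]; exists (\matrix_(i, j) Y j i) => j.
  by rewrite hY; apply: eq_bigr => i _; rewrite mxE.
have gb1 : forall i, in_span sc b1 (g i).
  by move=> i; apply: span_iter => //; exact: span_gen.
rewrite (KL (q:=m2) f1 h1 fc hA); last 2 first.
- by move=> j; apply: (span_trans gb1).
- exact: gc.
rewrite (KL (q:=(m2 + m1)%N) f2 h2 fc hA) //.
- by move=> j; apply: (span_trans (fun i => s2 (b1 i))).
- by move=> j; rewrite iterD; apply: (span_trans gc); apply: gphi.
Qed.

Lemma exists_data : finite_potent sc phi -> exists x, det_data sc phi x.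
Proof.
case=> m [n [s [hs hspan]]].
have [r [c [fc cs sc']]] := extract s.
have [U hU] := fin_all_exists hs.
have : forall j, in_span sc c (phi (c j)).
  move=> j; case: (cs j) => x ->; apply: (span_trans sc').
  rewrite (_ : \sum_i x i *: s i = iter m phi (lc U x)); last first.
    by rewrite iter_phi_sum /lc; apply: eq_bigr => i _; rewrite hU.
  by rewrite -iter_phiC.
move/fin_all_exists => [Y hY].
exists (existT _ r (c, \matrix_(i, j) Y j i)); split => //=; split.
  by exists m => u; apply: (span_trans sc').
by move=> j; rewrite hY; apply: eq_bigr => i _; rewrite mxE.
Qed.

Lemma Det1pE x : det_data sc phi x -> Det1p sc phi = \det (1 + (projT2 x).2).
Proof.
move=> hx; rewrite /Det1p; apply: WD => //.
by apply: epsilon_spec; exists x.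
Qed.

End Gen.

Lemma det_cast (R : comPzRingType) m n (e : m = n) (M : 'M[R]_m) :
  \det (castmx (e, e) M) = \det M.
Proof. by case: n / e; rewrite castmx_id. Qed.

Lemma det_schur (R : fieldType) n1 n2 (Aul : 'M[R]_n1) Aur Adl (Adr : 'M_n2) :
  Aul \in unitmx ->
  \det (block_mx Aul Aur Adl Adr) = \det Aul * \det (Adr - Adl *m invmx Aul *m Aur).
Proof.
move=> u.
have -> : block_mx Aul Aur Adl Adr = block_mx 1%:M 0 (Adl *m invmx Aul) 1%:M *m
    block_mx Aul Aur 0 (Adr - Adl *m invmx Aul *m Aur).
  rewrite mulmx_block !mul1mx !mul0mx ?mulmx0 ?addr0 ?add0r mulmxKV //.
  by rewrite addrC subrK.
by rewrite det_mulmx det_lblock det_ublock !det1 !mul1r.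
Qed.

Section Norm.
Variables (k : fieldType) (K : fieldExtType k).
Local Notation d := (\dim {:K}).
Local Notation e := (vbasis {:K}).

Definition mulm (a : K) : 'M[k]_d :=
  \matrix_(i, j) coord e i (a * tnth e j).

Lemma normKE a : normK a = \det (mulm a). Proof. by []. Qed.

Lemma e_free : free e. Proof. exact: basis_free (vbasisP _). Qed.

Lemma coordE (v : K) : v = \sum_i coord e i v *: tnth e i.
Proof.
rewrite {1}(coord_vbasis (memvf v)); apply: eq_bigr => i _.
by rewrite (tnth_nth 0).
Qed.

Lemma mulmM a b : mulm (a * b) = mulm a *m mulm b.
Proof.
apply/matrixP => i j; rewrite !mxE.
rewrite -mulrA {1}(coordE (b * tnth e j)) mulr_sumr linear_sum /=.
apply: eq_bigr => l _; rewrite !mxE -scalerAr linearZ /= mulrC.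
by [].
Qed.

Lemma mulmD a b : mulm (a + b) = mulm a + mulm b.
Proof. by apply/matrixP => i j; rewrite !mxE mulrDl linearD. Qed.

Lemma mulmN a : mulm (- a) = - mulm a.
Proof. by apply/matrixP => i j; rewrite !mxE mulNr linearN. Qed.

Lemma mulm0 : mulm 0 = 0.
Proof. by apply/matrixP => i j; rewrite !mxE mul0r linear0. Qed.

Lemma mulm1 : mulm 1 = 1%:M.
Proof.
apply/matrixP => i j; rewrite !mxE mul1r (tnth_nth 0) coord_free ?e_free //.
by rewrite eq_sym.
Qed.

Lemma mulm_inj a : mulm a = 0 -> a = 0.
Proof.
move=> h; have : forall j, a * tnth e j = 0.
  move=> j; rewrite (coordE (a * tnth e j)) big1 // => i _.
  by have := congr1 (fun N : 'M[k]_d => N i j) h; rewrite !mxE => ->; rewrite scale0r.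
move=> h2; rewrite -[a]mulr1 (coordE 1) mulr_sumr big1 // => i _.
by rewrite -scalerAr h2 scaler0.
Qed.

Lemma normK1 : @normK k K 1 = 1.
Proof. by rewrite normKE mulm1 det1. Qed.

Lemma normKM (a b : K) : @normK k K (a * b) = normK a * normK b.
Proof. by rewrite !normKE mulmM det_mulmx. Qed.

Lemma normK0 : @normK k K 0 = 0.
Proof.
rewrite normKE mulm0 -(scale0r 1%:M) scalemx1 det_scalar expr0n.
by have := adim_gt0 {:K}; case: (\dim {:K}).
Qed.

Definition rho n (A : 'M[K]_n) : 'M[k]_(\sum_(i < n) d) :=
  \mxblock_(i, j) mulm (A i j).

Lemma rhoM n (A B : 'M[K]_n) : rho (A *m B) = rho A *m rho B.
Proof.
rewrite /rho mul_mxblock; apply: eq_mxblock => i j; rewrite mxE.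
rewrite (big_morph mulm mulmD mulm0); apply: eq_bigr => l _.
by rewrite mulmM.
Qed.

Lemma rhoD n (A B : 'M[K]_n) : rho (A + B) = rho A + rho B.
Proof. by rewrite /rho -mxblockD; apply: eq_mxblock => i j; rewrite mxE mulmD. Qed.

Lemma rhoB n (A B : 'M[K]_n) : rho (A - B) = rho A - rho B.
Proof.
rewrite /rho -mxblockB; apply: eq_mxblock => i j.
by rewrite !mxE mulmD mulmN.
Qed.

Lemma rho1 n : rho (1%:M : 'M[K]_n) = 1%:M.
Proof.
rewrite /rho -(mxdiagZ 1) /mxdiag; apply: eq_mxblock => i j; rewrite mxE.
by case: (i == j); rewrite ?conform_mx_id ?mulm1 ?mulm0.
Qed.

Lemma rho_inj n (A : 'M[K]_n) : rho A = 0 -> A = 0.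
Proof.
move=> h; apply/matrixP => i j; rewrite mxE; apply: mulm_inj.
have := congr1 (fun N => submxblock N i j) h; rewrite /rho mxblockK => ->.
by rewrite submxblock0.
Qed.

Lemma rho0 n : rho (0 : 'M[K]_n) = 0.
Proof. by rewrite -(subrr 0) rhoB subrr. Qed.

Lemma rho_sing n (A : 'M[K]_n) : \det A = 0 -> \det (rho A) = 0.
Proof.
move/eqP/det0P => [v vn0 vA].
pose Vm : 'M[K]_n := \matrix_(i, j) v 0 j.
have VA : Vm *m A = 0.
  apply/matrixP => i j.
  have h1 : \sum_l v 0 l * A l j = 0.
    by have := congr1 (fun N : 'M[K]_(1, n) => N 0 j) vA; rewrite !mxE.
  rewrite !mxE (eq_bigr (fun l => v 0 l * A l j)) ?h1 // => l _.
  by rewrite mxE.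
have RV : rho Vm != 0.
  apply/eqP => /rho_inj h; move/eqP: vn0; apply; apply/rowP => j.
  by have := congr1 (fun N : 'M[K]_n => N j j) h; rewrite !mxE.
have /existsP[s hs] : [exists s, row s (rho Vm) != 0].
  apply: contraR RV; rewrite negb_exists => /forallP h.
  apply/eqP/row_matrixP => s; rewrite row0; apply/eqP.
  by move: (h s); rewrite negbK.
apply/eqP/det0P; exists (row s (rho Vm)) => //.
by rewrite -row_mul -rhoM VA rho0 row0.
Qed.

Lemma invmx_uniq n (A B : 'M[k]_n) : A *m B = 1%:M -> invmx A = B.
Proof.
move=> h; have [uA _] := mulmx1_unit h.
by rewrite -[invmx A]mulmx1 -h mulmxA mulVmx // mul1mx.
Qed.

Lemma rshift1 n (i : 'I_n) : rshift 1 i = lift ord0 i :> 'I_n.+1.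
Proof. by apply: val_inj. Qed.

Lemma lshift0 n : lshift n (ord0 : 'I_1) = ord0 :> 'I_n.+1.
Proof. by apply: val_inj. Qed.

Lemma det_rho n (A : 'M[K]_n) : \det (rho A) = normK (\det A).
Proof.
elim: n A => [|n IH] A.
  rewrite det_mx00 normK1; move: (rho A); rewrite big_ord0 => B.
  exact: det_mx00.
have hc : forall B : 'M[K]_n.+1, B 0 0 != 0 -> \det (rho B) = normK (\det B).
  move=> B hB.
  have hinv : mulm (B 0 0) *m mulm (B 0 0)^-1 = 1%:M by rewrite -mulmM mulfV // mulm1.
  have [u _] := mulmx1_unit hinv.
  rewrite /rho mxblock_recul det_cast det_schur // (invmx_uniq hinv).
  pose S : 'M[K]_n := \matrix_(i, j) (B (lift 0 i) (lift 0 j) -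
          B (lift 0 i) 0 * (B 0 0)^-1 * B 0 (lift 0 j)).
  have dB : \det B = B 0 0 * \det S.
    have ul : @ulsubmx _ 1 n 1 n B = (B 0 0)%:M.
      by apply/matrixP => i j; rewrite !mxE !ord1 lshift0.
    have := @det_schur K 1 n (@ulsubmx _ 1 n 1 n B) (@ursubmx _ 1 n 1 n B) (@dlsubmx _ 1 n 1 n B) (@drsubmx _ 1 n 1 n B).
    rewrite submxK ul invmx_scalar det_scalar expr1 => ->; last first.
      by rewrite unitmxE det_scalar expr1 unitfE.
    congr (_ * \det _); apply/matrixP => i j; rewrite !(mxE, big_ord1).
    by rewrite !rshift1 !lshift0 eqxx mulr1n.
  rewrite dB normKM normKE -IH; congr (_ * \det _).
  rewrite /rho mxcol_mul mul_mxcol_mxrow -mxblockB; apply: eq_mxblock => i j.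
  by rewrite -!mulmM -mulmN -mulmD mxE.
case: (boolP (\det A == 0)) => [/eqP z | nz]; first by rewrite z normK0 rho_sing.
case: (boolP (A 0 0 == 0)) => [/eqP a0 | ]; last exact: hc.
have /existsP[i hi] : [exists i, A i 0 != 0].
  move: nz; apply: contraR; rewrite negb_exists => /forallP h.
  rewrite (expand_det_col _ 0) big1 // => j _.
  by move: (h j); rewrite negbK => /eqP ->; rewrite mul0r.
have i0 : i != ord0 by apply: contraNneq hi => ->; rewrite a0.
pose E : 'M[K]_n.+1 := 1%:M + delta_mx ord0 i.
have dE : \det E = 1.
  rewrite -det_tr det_trig; last first.
    apply/is_trig_mxP => r c rc; rewrite !mxE.
    have cr : (c == r) = false by apply/negbTE; rewrite neq_ltn rc orbT.
    have c0 : (c == 0) = false by apply/negbTE; rewrite -lt0n (leq_ltn_trans _ rc).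
    by rewrite cr c0 addr0.
  rewrite big1 // => j _; rewrite !mxE eqxx.
  case: (boolP (j == ord0)) => [j0 | _]; last by rewrite addr0.
  have -> : (j == i) = false by apply/negbTE; apply: contraNneq i0 => <-; exact: j0.
  by rewrite addr0.
have E00 : E 0 0 != 0.
  rewrite /E !mxE eqxx.
  have -> : (0 == i) = false by apply/negbTE; apply: contraNneq i0 => <-.
  by rewrite addr0 oner_neq0.
have A200 : (E *m A) 0 0 != 0.
  rewrite mulmxDl mul1mx mxE a0 add0r mxE (bigD1 i) //= !mxE !eqxx big1 ?addr0.
    by rewrite mul1r.
  by move=> j /negbTE ji; rewrite !mxE ji mul0r.
have := hc _ A200; rewrite rhoM !det_mulmx (hc _ E00) dE normK1 !mul1r.
by [].
Qed.

End Norm.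

Section Main.
Variables (k : fieldType) (K : fieldExtType k) (V : lmodType K).
Local Notation d := (\dim {:K}).
Local Notation e := (vbasis {:K}).

Definition Vk : Type := V.
HB.instance Definition _ := GRing.Zmodule.on Vk.

Lemma rs_scalerA (a b : k) (v : Vk) :
  res_scale a (res_scale b v) = res_scale (a * b) v.
Proof. by rewrite /res_scale scalerA mulr_algl scalerA. Qed.
Lemma rs_scale1r (v : Vk) : res_scale 1 v = v.
Proof. by rewrite /res_scale scale1r scale1r. Qed.
Lemma rs_scalerDr (a : k) (u v : Vk) : res_scale a (u + v) = res_scale a u + res_scale a v.
Proof. by rewrite /res_scale scalerDr. Qed.
Lemma rs_scalerDl (v : Vk) (a b : k) : res_scale (a + b) v = res_scale a v + res_scale b v.
Proof. by rewrite /res_scale scalerDl scalerDl. Qed.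

HB.instance Definition _ := GRing.Zmodule_isLmodule.Build k Vk
  rs_scalerA rs_scale1r rs_scalerDr rs_scalerDl.

Lemma Vk_scaleE (a : k) (v : Vk) : a *: v = ((a%:A : K) *: (v : V) : V).
Proof. by []. Qed.

Lemma Det1p_Vk (phi : V -> V) :
  Det1p (@res_scale k K V) phi = @Det1p k Vk (fun a v => a *: v) phi.
Proof. by []. Qed.


Local Notation sig1 := (@tagnat.sig1 _ (fun=> d)).
Local Notation sig2 := (@tagnat.sig2 _ (fun=> d)).
Local Notation Rank := (@tagnat.Rank _ (fun=> d)).

Lemma sum_sig (R : nmodType) n (G : 'I_n -> 'I_d -> R) :
  \sum_(s < \sum_(i < n) d) G (sig1 s) (sig2 s) = \sum_i \sum_(t < d) G i t.
Proof.
rewrite (sig_big_dep (fun=> true) (fun _ _ => true) G) /=.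
by rewrite (reindex _ tagnat.sig_bij_on) /=.
Qed.

Definition bb n (b : 'I_n -> V) (s : 'I_(\sum_(i < n) d)) : Vk :=
  tnth e (sig2 s) *: b (sig1 s).

Lemma sum_bb n (b : 'I_n -> V) (f : 'I_n -> 'I_d -> k) :
  \sum_(s < \sum_(i < n) d) f (sig1 s) (sig2 s) *: bb b s =
  (\sum_i (\sum_(t < d) f i t *: tnth e t) *: b i : V).
Proof.
rewrite (sum_sig (fun i t => f i t *: (tnth e t *: b i : Vk))).
apply: eq_bigr => i _; rewrite scaler_suml; apply: eq_bigr => t _.
by rewrite Vk_scaleE scalerA mulr_algl.
Qed.

Lemma kdata (phi : {linear V -> V}) n (b : 'I_n -> V) (M : 'M[K]_n) :
  det_data (fun (a : K) (v : V) => a *: v) phi (existT _ n (b, M)) ->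
  @det_data k Vk (fun a v => a *: v) phi (existT _ (\sum_(i < n) d) (bb b, rho M)).
Proof.
rewrite /det_data /= => -[fb [[m hm] hM]].
split; [|split].
- move=> c hc s.
  have e1 : forall i, \sum_(t < d) c (Rank i t) *: tnth e t = 0.
    apply: fb; rewrite -(sum_bb b (fun i t => c (Rank i t))) -[RHS]hc.
    by apply: eq_bigr => s' _; rewrite tagnat.sig2K.
  rewrite -(tagnat.sig2K s).
  move: (e1 (sig1 s)); under eq_bigr do rewrite (tnth_nth 0).
  by move/freeP: (e_free K) => h /h ->.
- exists m => u; have [x hx] := hm u.
  exists (fun s => coord e (sig2 s) (x (sig1 s))).
  rewrite hx (sum_bb b (fun i t => coord e t (x i))); apply: eq_bigr => i _.
  by rewrite -coordE.
- move=> s; rewrite linearZ /= hM scaler_sumr.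
  rewrite (eq_bigr (fun s' => (mulm (M (sig1 s') (sig1 s))) (sig2 s') (sig2 s) *: bb b s')); last first.
    by move=> s' _; rewrite mxE.
  rewrite (sum_bb b (fun l u => mulm (M l (sig1 s)) u (sig2 s))).
  apply: eq_bigr => l _; rewrite scalerA.
  have -> : \sum_(t < d) mulm (M l (sig1 s)) t (sig2 s) *: tnth e t = M l (sig1 s) * tnth e (sig2 s).
    under eq_bigr do rewrite mxE.
    by rewrite -coordE.
  by rewrite mulrC.
Qed.

End Main.

Unset Implicit Arguments.

Theorem proposition3p8 (k : fieldType) (K : fieldExtType k) (V : lmodType K)
  (phi : {linear V -> V}) :
  finite_potent (fun (a : K) (v : V) => a *: v) phi ->
  bijective (fun v : V => v + phi v) ->
  Det1p (res_scale (V := V)) phi = normK (Det1p (fun (a : K) (v : V) => a *: v) phi).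
Proof.
move=> fp _.
have hD : forall u v, phi (u + v) = phi u + phi v by move=> u v; rewrite linearD.
have hZ : forall (a : K) (u : V), phi (a *: u) = a *: (phi u : V) by move=> a u; rewrite linearZ.
have [[n [b M]] hx] := exists_data hD hZ fp.
rewrite (Det1pE hD hZ hx) /=.
have hkD : forall u v : Vk V, phi (u + v) = phi u + phi v := hD.
have hkZ : forall (a : k) (u : Vk V), phi (a *: u) = a *: (phi u : Vk V).
  by move=> a u; rewrite !Vk_scaleE linearZ.
rewrite Det1p_Vk (Det1pE hkD hkZ (kdata hx)) /=.
by rewrite -det_rho rhoD rho1.
Qed.
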